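(* Consider the partial differential equation, for real functions $\mu_t=\mu(t,x)$ and $\sigma_t=\sigma(t,x)>0$, $$\frac{\partial}{\partial x}\left[\frac{1}{\sigma_t}\frac{\partial\sigma_t}{\partial t}+\sigma_t\frac{\partial}{\partial x}\left(\frac12\frac{\partial\sigma_t}{\partial x}-\frac{\mu_t}{\sigma_t}\right)\right]=0.$$ Let $\tilde\sigma:[0,\infty)\to\mathbb{R}_+$. Then: 1. (L-class) If $\sigma(t,x)=\tilde\sigma(t)$, the general solution for the drift is $\mu(t,x)=\alpha(t)x+\beta(t)$, $x\in\mathbb{R}$, with $\alpha,\beta$ arbitrary real functions. 2. (G-class) If $\sigma(t,x)=\tilde\sigma(t)x$, the general solution for the drift is $\mu(t,x)=\alpha(t)x+\beta(t)x\log x$, $x\in\mathbb{R}_+$, with $\alpha,\beta$ arbitrary real functions. *)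

(* Defs.v *)
From Stdlib Require Export Reals.
From Coquelicot Require Export Coquelicot.
Open Scope R_scope.

Definition d_t (f : R -> R -> R) (t x : R) : R := Derive (fun s => f s x) t.
Definition d_x (f : R -> R -> R) (t x : R) : R := Derive (fun y => f t y) x.

Definition pde_inner (mu sigma : R -> R -> R) : R -> R -> R :=
  fun t x => / 2 * d_x sigma t x - mu t x / sigma t x.

Definition pde_bracket (mu sigma : R -> R -> R) : R -> R -> R :=
  fun t x => d_t sigma t x / sigma t x + sigma t x * d_x (pde_inner mu sigma) t x.

Definition solves_pde (mu sigma : R -> R -> R) (D : R -> Prop) : Prop :=
  forall t x, 0 <= t -> D x ->
    ex_derive (fun s => sigma s x) t /\
    ex_derive (fun y => sigma t y) x /\
    ex_derive (fun y => mu t y) x /\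
    ex_derive (fun y => pde_inner mu sigma t y) x /\
    ex_derive (fun y => pde_bracket mu sigma t y) x /\
    d_x (pde_bracket mu sigma) t x = 0.

(* Main.v *)
Require Import Defs.
From Stdlib Require Import Reals Lra.
From Coquelicot Require Import Coquelicot.
Open Scope R_scope.

Lemma zero_deriv_const (P : R -> Prop)
  (HP : forall a b t, P a -> P b -> a <= t <= b -> P t) (f : R -> R)
  (Hf : forall y, P y -> is_derive f y 0) a b : P a -> P b -> f a = f b.
Proof.
  intros Pa Pb. destruct (Rtotal_order a b) as [h|[h|h]].
  - apply eq_is_derive; [|exact h]. intros t Ht. apply Hf. apply (HP a b); auto.
  - now subst.
  - symmetry. apply eq_is_derive; [|exact h]. intros t Ht. apply Hf. apply (HP b a); auto.
Qed.

Lemma loc_pos x : 0 < x -> locally x (fun y => 0 < y).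
Proof.
  intros Hx. exists (mkposreal x Hx). intros y Hy.
  change (Rabs (y - x) < x) in Hy. apply Rabs_def2 in Hy. simpl in Hy. lra.
Qed.

Lemma Derive_lin k y : Derive (fun z => k * z) y = k.
Proof. apply is_derive_unique. auto_derive; auto; ring. Qed.
Lemma part1_fwd st mu t : 0 < st t ->
  solves_pde mu (fun t _ => st t) (fun _ => True) -> 0 <= t ->
  exists A C, forall y, mu t y = A * y + C.
Proof.
  intros Hs H Ht.
  set (fI := fun y => pde_inner mu (fun t _ => st t) t y).
  set (fB := fun y => pde_bracket mu (fun t _ => st t) t y).
  assert (HB : forall y, fB y = fB 0).
  { intros y. apply (zero_deriv_const (fun _ => True)); auto.
    intros z _. destruct (H t z Ht I) as (_&_&_&_&h1&h2).
    unfold d_x in h2. rewrite <- h2. apply Derive_correct. exact h1. }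
  set (k := Derive fI 0).
  assert (HD : forall y, Derive fI y = k).
  { intros y. specialize (HB y). unfold fB, pde_bracket in HB. unfold d_x, d_t in HB.
    fold fI in HB. unfold k.
    apply (Rmult_eq_reg_l (st t)); [|lra]. lra. }
  assert (HI : forall y, fI y = fI 0 + k * y).
  { intros y. assert (E: fI y - k * y = fI 0 - k * 0).
    { apply (zero_deriv_const (fun _ => True) (fun _ _ _ _ _ _ => I) (fun y => fI y - k * y)); auto.
      intros z _. destruct (H t z Ht I) as (_&_&_&h1&_&_).
      replace 0 with (Derive fI z - k * 1) by (rewrite HD; ring).
      assert (h2 : is_derive (fun y => k * y) z (k * 1)).
      { auto_derive; auto; ring. }
      exact (is_derive_minus fI (fun y => k * y) z _ _ (Derive_correct _ _ h1) h2). }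
    lra. }
  exists (- st t * k), (mu t 0). intros y.
  specialize (HI y). unfold fI, pde_inner, d_x in HI; cbv beta in HI. rewrite !Derive_const in HI.
  assert (E1: mu t y / st t = mu t 0 / st t - k*y) by lra.
  assert (E2: mu t y = st t * (mu t y / st t)) by (field; lra).
  rewrite E2, E1. field. lra.
Qed.
Lemma pos_convex : forall a b t : R, 0 < a -> 0 < b -> a <= t <= b -> 0 < t.
Proof. intros; lra. Qed.

Lemma part2_fwd st mu t : 0 < st t ->
  solves_pde mu (fun t x => st t * x) (fun x => 0 < x) -> 0 <= t ->
  exists A C, forall y, 0 < y -> mu t y = A * y + C * y * ln y.
Proof.
  intros Hs H Ht.
  set (fI := fun y => pde_inner mu (fun t x => st t * x) t y).
  set (fB := fun y => pde_bracket mu (fun t x => st t * x) t y).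
  assert (HB : forall y, 0 < y -> fB y = fB 1).
  { intros y Hy. apply (zero_deriv_const (fun y => 0 < y) pos_convex); auto; try lra.
    intros z Hz. destruct (H t z Ht Hz) as (_&_&_&_&h1&h2).
    unfold d_x in h2. rewrite <- h2. apply Derive_correct. exact h1. }
  set (k := Derive fI 1).
  assert (HD : forall y, 0 < y -> Derive fI y = k / y).
  { intros y Hy. specialize (HB y Hy). unfold fB, pde_bracket in HB. unfold d_x, d_t in HB.
    fold fI in HB. unfold k. rewrite !Derive_scal_l in HB.
    assert (E : Derive st t * y / (st t * y) = Derive st t * 1 / (st t * 1)) by (field; lra).
    rewrite E in HB.
    apply (Rmult_eq_reg_l (st t * y)); [|nra]. field_simplify; try lra. }
  assert (HI : forall y, 0 < y -> fI y = fI 1 + k * ln y).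
  { intros y Hy. assert (E: fI y - k * ln y = fI 1 - k * ln 1).
    { apply (zero_deriv_const (fun y => 0 < y) pos_convex (fun y => fI y - k * ln y)); auto; try lra.
      intros z Hz. destruct (H t z Ht Hz) as (_&_&_&h1&_&_).
      replace 0 with (Derive fI z - k * / z) by (rewrite HD; auto; field; lra).
      assert (h2 : is_derive (fun y => k * ln y) z (k * / z)).
      { auto_derive; auto; field; lra. }
      exact (is_derive_minus fI (fun y => k * ln y) z _ _ (Derive_correct _ _ h1) h2). }
    rewrite ln_1 in E. lra. }
  exists (st t * (st t / 2 - fI 1)), (- st t * k). intros y Hy.
  specialize (HI y Hy). unfold fI at 1, pde_inner, d_x in HI; cbv beta in HI.
  rewrite Derive_lin in HI.
  assert (E1: mu t y / (st t * y) = st t / 2 - fI 1 - k * ln y) by lra.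
  assert (E2: mu t y = (st t * y) * (mu t y / (st t * y))) by (field; nra).
  rewrite E2, E1. field.
Qed.
Lemma part1_bwd st mu (alpha beta : R -> R)
  (Hpos : forall t, 0 <= t -> 0 < st t)
  (Hdiff : forall t, 0 <= t -> ex_derive st t)
  (Hmu : forall t x, 0 <= t -> mu t x = alpha t * x + beta t) :
  solves_pde mu (fun t _ => st t) (fun _ => True).
Proof.
  intros t x Ht _. pose proof (Hpos t Ht) as Hs.
  assert (HI : forall y, pde_inner mu (fun t _ => st t) t y
                 = - alpha t / st t * y - beta t / st t).
  { intros y. unfold pde_inner, d_x. rewrite Derive_const, Hmu by exact Ht. field. lra. }
  assert (HId : forall y, is_derive (fun y => pde_inner mu (fun t _ => st t) t y) y (- alpha t / st t)).
  { intros y. apply is_derive_ext with (f := fun y => - alpha t / st t * y - beta t / st t).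
    intros z; rewrite HI; reflexivity. auto_derive; auto; ring. }
  assert (HD : forall y, Derive (fun y => pde_inner mu (fun t _ => st t) t y) y = - alpha t / st t).
  { intros y. apply is_derive_unique, HId. }
  assert (HBc : forall y, pde_bracket mu (fun t _ => st t) t y = Derive st t / st t - alpha t).
  { intros y. unfold pde_bracket, d_t, d_x. rewrite HD. change (Derive (fun s => st s) t) with (Derive st t). field. lra. }
  split; [exact (Hdiff t Ht)|].
  split; [apply ex_derive_const|].
  split. { exists (alpha t). apply is_derive_ext with (f := fun y => alpha t * y + beta t).
    intros z; rewrite Hmu by exact Ht; reflexivity. auto_derive; auto; ring. }
  split. { exists (- alpha t / st t). apply HId. }
  assert (HB : is_derive (fun y => pde_bracket mu (fun t _ => st t) t y) x 0).
  { apply is_derive_ext with (f := fun _ => Derive st t / st t - alpha t).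
    intros z; rewrite HBc; reflexivity. auto_derive; auto. }
  split. { exists 0. exact HB. }
  unfold d_x. exact (is_derive_unique _ _ _ HB).
Qed.
Lemma part2_bwd st mu (alpha beta : R -> R)
  (Hpos : forall t, 0 <= t -> 0 < st t)
  (Hdiff : forall t, 0 <= t -> ex_derive st t)
  (Hmu : forall t x, 0 <= t -> 0 < x -> mu t x = alpha t * x + beta t * x * ln x) :
  solves_pde mu (fun t x => st t * x) (fun x => 0 < x).
Proof.
  intros t x Ht Hx. pose proof (Hpos t Ht) as Hs.
  assert (HI : forall y, 0 < y -> pde_inner mu (fun t x => st t * x) t y
                 = st t / 2 - alpha t / st t - beta t / st t * ln y).
  { intros y Hy. unfold pde_inner, d_x. rewrite Derive_lin, Hmu by auto. field. lra. }
  assert (HId : forall y, 0 < y -> is_derive (fun y => pde_inner mu (fun t x => st t * x) t y) y (- beta t / st t / y)).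
  { intros y Hy. apply is_derive_ext_loc with (f := fun y => st t / 2 - alpha t / st t - beta t / st t * ln y).
    apply filter_imp with (2 := loc_pos y Hy). intros z Hz; rewrite HI; auto.
    auto_derive; auto. field. lra. }
  assert (HD : forall y, 0 < y -> Derive (fun y => pde_inner mu (fun t x => st t * x) t y) y = - beta t / st t / y).
  { intros y Hy. apply is_derive_unique, HId; auto. }
  assert (HBc : forall y, 0 < y -> pde_bracket mu (fun t x => st t * x) t y = Derive st t / st t - beta t).
  { intros y Hy. unfold pde_bracket, d_t, d_x. rewrite HD by auto. rewrite Derive_scal_l. field. lra. }
  split. { apply (ex_derive_mult st (fun _ => x)). apply Hdiff; auto. apply ex_derive_const. }
  split. { exists (st t). apply is_derive_ext with (f := fun y => st t * y). reflexivity.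
    auto_derive; auto; ring. }
  split. { exists (alpha t + beta t * (ln x + 1)).
    apply is_derive_ext_loc with (f := fun y => alpha t * y + beta t * y * ln y).
    apply filter_imp with (2 := loc_pos x Hx). intros z Hz; rewrite Hmu; auto.
    auto_derive; auto. field. lra. }
  split. { exists (- beta t / st t / x). apply HId; auto. }
  assert (HB : is_derive (fun y => pde_bracket mu (fun t x => st t * x) t y) x 0).
  { apply is_derive_ext_loc with (f := fun _ => Derive st t / st t - beta t).
    apply filter_imp with (2 := loc_pos x Hx). intros z Hz; rewrite HBc; auto.
    auto_derive; auto. }
  split. { exists 0. exact HB. }
  unfold d_x. exact (is_derive_unique _ _ _ HB).
Qed.
Theorem corollary6 (st : R -> R)
  (Hpos : forall t, 0 <= t -> 0 < st t)
  (Hdiff : forall t, 0 <= t -> ex_derive st t) :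
  (forall mu : R -> R -> R,
     solves_pde mu (fun t _ => st t) (fun _ => True) <->
     exists alpha beta : R -> R,
       forall t x, 0 <= t -> mu t x = alpha t * x + beta t) /\
  (forall mu : R -> R -> R,
     solves_pde mu (fun t x => st t * x) (fun x => 0 < x) <->
     exists alpha beta : R -> R,
       forall t x, 0 <= t -> 0 < x -> mu t x = alpha t * x + beta t * x * ln x).
Proof.
  split; intros mu; split.
  - intros H. exists (fun t => mu t 1 - mu t 0), (fun t => mu t 0).
    intros t x Ht. destruct (part1_fwd st mu t (Hpos t Ht) H Ht) as (A & C & E).
    rewrite !E. ring.
  - intros (alpha & beta & E). exact (part1_bwd st mu alpha beta Hpos Hdiff E).
  - intros H. exists (fun t => mu t 1), (fun t => mu t (exp 1) / exp 1 - mu t 1).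
    intros t x Ht Hx. destruct (part2_fwd st mu t (Hpos t Ht) H Ht) as (A & C & E).
    pose proof (exp_pos 1) as He.
    rewrite !E by lra. rewrite ln_1, ln_exp. field. lra.
  - intros (alpha & beta & E). exact (part2_bwd st mu alpha beta Hpos Hdiff E).
Qed.
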